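(* Let $\kappa$ be an ordinal of uncountable cofinality and let $Z$, $Z_Y$ be as described in the context. Suppose given, for all $\beta < \alpha$ in $[2,\kappa)$, morphisms $u^\beta_\alpha: \beta \to \alpha$ of $Z_Y$ such that $u^\gamma_\alpha = u^\beta_\alpha u^\gamma_\beta$ for all $\gamma < \beta < \alpha$ in $[2,\kappa)$. Then there exists a pair $\beta < \alpha$ in $[2,\kappa)$ such that $u^\beta_\alpha$ passes through some vertex $\gamma$ with $\gamma < \beta$.
   Context: For an ordinal $\alpha \ge 2$ let $G_\alpha$ be the free group on the set $\alpha$; for $\gamma \le \alpha$ let $D^\gamma_\alpha: G_\gamma \to G_\alpha$ be the natural inclusion. Let $Z$ be the groupoid with object set $[2,\kappa)$ generated by: the elements of $G_\alpha$ as automorphisms of the object $\alpha$; and, for each pair $\alpha \neq \beta$ in $[2,\kappa)$, a morphism $y^\beta_\alpha: \beta \to \alpha$; subject to the relations of each group $G_\alpha$ and the relations $y^\beta_\alpha \, D^{\varepsilon}_\beta(a)\, y^\alpha_\beta = D^{\varepsilon}_\alpha(a)$ for all $a \in G_\varepsilon$, $\varepsilon = \min(\alpha,\beta)$ (so $y^\alpha_\beta = (y^\beta_\alpha)^{-1}$). $Z_Y$ is the subgroupoid of $Z$ generated by the edges $y^\beta_\alpha$; every morphism of $Z_Y$ can be uniquely written as a reduced word in the generators $y^\beta_\alpha$ (i.e. $Z_Y$ is the free groupoid on the edges, with $y^\alpha_\beta$ the inverse of $y^\beta_\alpha$). A morphism of $Z_Y$ passes through a vertex $\delta$ if its reduced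 word involves a generator with source or target $\delta$; the identity $\mathrm{id}_\delta$ passes through $\delta$ and no other vertex. *)

(* Defs.v *)
From Stdlib Require Import List Relations.
Import ListNotations.
Set Implicit Arguments.

(** The ordinal kappa is represented by a well-ordered type (T, lt);
    ordinals are exactly the order types of well-orders. *)
Definition is_well_order {T : Type} (lt : T -> T -> Prop) : Prop :=
  (forall x, ~ lt x x) /\
  (forall x y z, lt x y -> lt y z -> lt x z) /\
  (forall x y, lt x y \/ x = y \/ lt y x) /\
  well_founded lt.

(** cf(kappa) is uncountable: kappa is nonzero and no countable
    (nat-indexed) family of elements is cofinal, i.e. every such family
    is strictly bounded above. *)
Definition uncountable_cofinality {T : Type} (lt : T -> T -> Prop) : Prop :=
  inhabited T /\ forall f : nat -> T, exists t, forall n, lt (f n) t.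

(** x lies in [2, kappa): x has at least the two predecessors 0 < 1. *)
Definition ge2 {T : Type} (lt : T -> T -> Prop) (x : T) : Prop :=
  exists a b, lt a b /\ lt b x.

(** Morphisms of Z_Y (free groupoid on the complete graph on the vertex
    set V, edges y^b_a : b -> a for a <> b) are represented by their
    reduced words, i.e. as vertex lists [v0; v1; ...; vn] from source v0
    to target vn, with consecutive vertices distinct (each step is a
    generator y^{v_i}_{v_{i+1}}) and no backtracking (v_i <> v_{i+2}).
    The identity at b is [b]. *)
Fixpoint adj_distinct {T : Type} (p : list T) : Prop :=
  match p with
  | x :: ((y :: _) as q) => x <> y /\ adj_distinct q
  | _ => True
  end.

Fixpoint no_backtrack {T : Type} (p : list T) : Prop :=
  match p with
  | x :: ((_ :: z :: _) as q) => x <> z /\ no_backtrack q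
  | _ => True
  end.

Definition reduced_path {T : Type} (V : T -> Prop) (p : list T) (s t : T)
  : Prop :=
  Forall V p /\ adj_distinct p /\ no_backtrack p /\
  hd_error p = Some s /\ last p s = t.

(** Composition of paths: [compose q p] is q o p (first p, then q),
    as the concatenated (not necessarily reduced) word. *)
Definition compose {T : Type} (q p : list T) : list T := p ++ tl q.

Inductive cancel_step {T : Type} : list T -> list T -> Prop :=
| cancel_step_intro : forall (l1 l2 : list T) (x y : T), x <> y ->
    cancel_step (l1 ++ x :: y :: x :: l2) (l1 ++ x :: l2).

Definition path_equiv {T : Type} : list T -> list T -> Prop :=
  clos_refl_sym_trans (list T) cancel_step.

Definition passes_through {T : Type} (p : list T) (d : T) : Prop := In d p.

(* Main.v *)
Require Import Defs.
From Stdlib Require Import List Relations Classical ClassicalEpsilon Arith Lia.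
Import ListNotations.
Set Implicit Arguments.

Section Red.
Variable T : Type.

Definition push (z : T) (s : list T) : list T :=
  match s with
  | y :: ((x :: s') as t) =>
      if excluded_middle_informative (z = x /\ x <> y) then t else z :: s
  | _ => z :: s
  end.

Definition F (s : list T) (z : T) := push z s.
Definition red (l : list T) := fold_left F l [].

Fixpoint okst (s : list T) : Prop :=
  match s with
  | a :: ((b :: c :: _) as t) => (a = c -> a = b) /\ okst t
  | _ => True
  end.

Lemma okst_tail a t : okst (a :: t) -> okst t.
Proof. destruct t as [|b [|c t']]; simpl; tauto. Qed.

Lemma push_ok z s : okst s -> okst (push z s).
Proof.
  intro H. destruct s as [|y [|x s']]; simpl; auto.
  destruct (excluded_middle_informative (z = x /\ x <> y)) as [Hc|Hc].
  - exact (okst_tail _ _ H).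
  - simpl. split; [|exact H]. intro E. apply NNPP. intro Hne. apply Hc. split; [auto | intro; apply Hne; congruence].
Qed.

Lemma push_top z s : exists t, push z s = z :: t.
Proof.
  destruct s as [|y [|x s']]; simpl; eauto.
  destruct (excluded_middle_informative (z = x /\ x <> y)) as [[-> _]|_]; eauto.
Qed.

Lemma push_key x y s : okst s -> x <> y -> push x (push y (push x s)) = push x s.
Proof.
  intros Hs Hxy.
  destruct (push_top x s) as [t Ht].
  pose proof (push_ok x s Hs) as Hok. rewrite Ht in *.
  destruct t as [|c t'].
  - simpl. destruct (excluded_middle_informative (x = x /\ x <> y)) as [_|Hc]; [reflexivity | exfalso; apply Hc; split; auto].
  - simpl.
    destruct (excluded_middle_informative (y = c /\ c <> x)) as [[-> Hcx]|Hn].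
    + destruct t' as [|d t'']; simpl; auto.
      destruct (excluded_middle_informative (x = d /\ d <> c)) as [[-> _]|_]; auto.
      simpl in Hok. destruct Hok as [Hok _]. exfalso. auto.
    + simpl. destruct (excluded_middle_informative (x = x /\ x <> y)) as [_|Hc]; [reflexivity | exfalso; apply Hc; split; auto].
Qed.

Lemma fold_ok l s : okst s -> okst (fold_left F l s).
Proof.
  revert s; induction l; simpl; auto. intros s Hs. apply IHl. apply push_ok; auto.
Qed.

Lemma red_equiv l1 l2 : path_equiv l1 l2 -> red l1 = red l2.
Proof.
  induction 1; try congruence.
  destruct H. unfold red. rewrite !fold_left_app. simpl.
  unfold F at 1 2 3 4. rewrite push_key; auto. apply fold_ok. simpl; auto.
Qed.

Lemma nb_tail (a : T) (t : list T) : no_backtrack (a :: t) -> no_backtrack t.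
Proof. destruct t as [|b [|c t']]; simpl; tauto. Qed.

Lemma nb_char (l : list T) : no_backtrack l ->
  forall l1 x y z l2, l = l1 ++ x :: y :: z :: l2 -> x <> z.
Proof.
  intros H l1. revert l H. induction l1; intros l H x y z l2 E; simpl in E; subst.
  - simpl in H. tauto.
  - apply nb_tail in H. eapply IHl1; eauto.
Qed.

Lemma red_rev (l : list T) : (forall l1 x y z l2, l = l1 ++ x :: y :: z :: l2 -> x <> z) ->
  red l = rev l.
Proof.
  induction l as [|z l IH] using rev_ind; intros H; auto.
  unfold red in *. rewrite fold_left_app. simpl. rewrite IH.
  2:{ intros l1 x y w l2 E. apply (H l1 x y w (l2 ++ [z])). subst.
      rewrite <- app_assoc. reflexivity. }
  rewrite rev_app_distr. simpl.
  destruct (rev l) as [|y [|x s']] eqn:E; simpl; auto.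
  destruct (excluded_middle_informative (z = x /\ x <> y)) as [[-> _]|_]; auto.
  exfalso. apply (H (rev s') x y x []); auto.
  rewrite <- (rev_involutive l), E. simpl. rewrite <- !app_assoc. reflexivity.
Qed.

Definition Inv (p q : list T) (s : list T) : Prop :=
  exists A c B, s = A ++ c :: B /\ In c p /\ In c q /\ (forall x, In x B -> In x p).

Lemma push_inv p q z s : In z q -> Inv p q s -> Inv p q (push z s).
Proof.
  intros Hz [A [c [B [E [H1 [H2 H3]]]]]].
  assert (Hnp : Inv p q (z :: s)).
  { exists (z :: A), c, B. subst. auto. }
  destruct s as [|y [|x s']]; simpl; auto.
  destruct (excluded_middle_informative (z = x /\ x <> y)) as [[-> _]|_]; auto.
  destruct A as [|a0 A'].
  - simpl in E. injection E as <- <-. exists [], x, s'. repeat split; simpl; auto; [apply H3; simpl; auto | intros w Hw; apply H3; simpl; auto].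
  - simpl in E. injection E as <- E. exists A', c, B. auto.
Qed.

Lemma fold_inv p q l s : (forall z, In z l -> In z q) -> Inv p q s ->
  Inv p q (fold_left F l s).
Proof.
  revert s; induction l; simpl; auto. intros s Hl Hs. apply IHl; auto.
  apply push_inv; auto.
Qed.

Lemma junction (p q : list T) (r b : T) :
  hd_error p = Some r -> last p r = b -> hd_error q = Some b ->
  (forall l1 x y z l2, p = l1 ++ x :: y :: z :: l2 -> x <> z) ->
  exists A c B, red (p ++ tl q) = A ++ c :: B /\ In c p /\ In c q.
Proof.
  intros Hp Hl Hq Hnb.
  assert (Hpn : p <> []) by (intro; subst; discriminate).
  assert (Hinv : Inv p q (fold_left F (tl q) (red p))).
  { apply fold_inv.
    - intros z Hz. destruct q; simpl in *; auto.
    - rewrite red_rev; auto.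
      pose proof (app_removelast_last r Hpn) as Ep. rewrite Hl in Ep.
      exists [], b, (rev (removelast p)). rewrite Ep at 1. rewrite rev_app_distr.
      simpl. repeat split.
      + rewrite Ep. apply in_or_app. simpl; auto.
      + destruct q; simpl in Hq; try discriminate. injection Hq as ->. simpl; auto.
      + intros x Hx. rewrite Ep. apply in_or_app. left. apply in_rev. exact Hx. }
  destruct Hinv as [A [c [B [E [H1 [H2 _]]]]]].
  exists A, c, B. unfold red at 1. rewrite fold_left_app. auto.
Qed.

End Red.

Theorem lemma3p13 (T : Type) (lt : T -> T -> Prop)
  (Hwo : is_well_order lt) (Hcf : uncountable_cofinality lt)
  (u : T -> T -> list T)
  (Hu : forall b a, ge2 lt b -> ge2 lt a -> lt b a ->
        reduced_path (ge2 lt) (u b a) b a)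
  (Hcoh : forall c b a, ge2 lt c -> ge2 lt b -> ge2 lt a ->
          lt c b -> lt b a ->
          path_equiv (u c a) (compose (u b a) (u c b))) :
  exists b a, ge2 lt b /\ ge2 lt a /\ lt b a /\
    exists c, lt c b /\ passes_through (u b a) c.
Proof.
  destruct Hwo as [Hirr [Htr [Htri Hwf]]].
  apply NNPP; intro Hn.
  assert (Hlow : forall b a c, ge2 lt b -> ge2 lt a -> lt b a -> In c (u b a) -> ~ lt c b).
  { intros b a c Hb Ha Hba Hc Hcb. apply Hn. exists b, a. repeat split; auto.
    exists c; split; auto. }
  assert (Hge2 : forall x y, ge2 lt x -> lt x y -> ge2 lt y).
  { intros x y [p [q [H1 H2]]] Hxy. exists p, q. split; eauto. }
  destruct Hcf as [[t0] Hcf].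
  destruct (Hcf (fun _ => t0)) as [t1 H1].
  destruct (Hcf (fun _ => t1)) as [r H2].
  assert (Hr : ge2 lt r) by (exists t0, t1; split; [apply (H1 0)|apply (H2 0)]).
  assert (ub : forall L : list T, {t | forall x, In x L -> lt x t}).
  { intro L. apply constructive_indefinite_description.
    destruct (Hcf (fun n => nth n L t0)) as [t Ht]. exists t. intros x Hx.
    destruct (In_nth L x t0 Hx) as [n [_ Hn']]. rewrite <- Hn'. apply Ht. }
  pose (a := fix a (n : nat) : T := match n with
       | 0 => proj1_sig (ub [r])
       | S k => proj1_sig (ub (a k :: u r (a k))) end).
  assert (Ha0 : lt r (a 0)) by (apply (proj2_sig (ub [r])); simpl; auto).
  assert (HaS : forall k x, In x (a k :: u r (a k)) -> lt x (a (S k))).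
  { intros k x Hx. apply (proj2_sig (ub (a k :: u r (a k)))). exact Hx. }
  assert (Hmono : forall n m, n <= m -> forall c, lt c (a n) -> lt c (a m)).
  { intros n m Hnm. induction Hnm; auto. intros c Hc.
    apply (Htr c (a m) (a (S m))); auto. apply HaS. simpl; auto. }
  assert (Hra : forall n, lt r (a n)) by (intro n; apply (Hmono 0); auto; lia).
  assert (Hga : forall n, ge2 lt (a n)) by (intro n; eauto).
  assert (Hmin : forall P : T -> Prop, (exists x, P x) ->
            exists m, P m /\ forall y, lt y m -> ~ P y).
  { intros P [x Px]. apply NNPP; intro Hno.
    assert (Hall : forall z, ~ P z).
    { intro z. induction z using (well_founded_ind Hwf). intro Pz. apply Hno.
      exists z; split; auto. }
    exact (Hall x Px). }
  destruct (Hmin (fun t => forall n, lt (a n) t) (Hcf a)) as [lam [Hlam Hlmin]].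
  assert (Hbelow : forall c, lt c lam -> exists n, lt c (a n)).
  { intros c Hc. specialize (Hlmin c Hc).
    apply not_all_ex_not in Hlmin. destruct Hlmin as [n Hn'].
    destruct (Htri (a n) c) as [H|[H|H]].
    - contradiction.
    - exists (S n). rewrite <- H. apply HaS. simpl; auto.
    - exists n; auto. }
  assert (Hfin : forall L : list T, exists N, forall c, In c L -> lt c lam -> lt c (a N)).
  { induction L as [|x L [N1 HN1]].
    - exists 0. intros c [].
    - destruct (classic (lt x lam)) as [Hx|Hx].
      + destruct (Hbelow x Hx) as [n Hn'].
        exists (n + N1). intros c [<-|Hc] Hcl.
        * apply (Hmono n); auto. lia.
        * apply (Hmono N1); auto. lia.
      + exists N1. intros c [<-|Hc] Hcl; auto. contradiction. }
  destruct (Hfin (u r lam)) as [N HN].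
  set (b := a N).
  assert (Hbl : lt b lam) by apply Hlam.
  assert (Hgl : ge2 lt lam) by eauto.
  pose proof (Hcoh r b lam Hr (Hga N) Hgl (Hra N) Hbl) as Heq.
  apply red_equiv in Heq. unfold compose in Heq.
  destruct (Hu r b Hr (Hga N) (Hra N)) as [_ [_ [Hnbp [Hhp Hlp]]]].
  destruct (Hu b lam (Hga N) Hgl Hbl) as [_ [_ [_ [Hhq _]]]].
  destruct (Hu r lam Hr Hgl (Htr _ _ _ (Hra N) Hbl)) as [_ [_ [Hnbl _]]].
  destruct (@junction T _ _ _ _ Hhp Hlp Hhq (@nb_char T _ Hnbp)) as [A [c [B [E [Hcp Hcq]]]]].
  rewrite <- Heq, red_rev in E by exact (@nb_char T _ Hnbl).
  assert (Hcl : In c (u r lam)).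
  { apply in_rev. rewrite E. apply in_or_app. simpl; auto. }
  assert (Hbc : ~ lt c b) by exact (Hlow b lam c (Hga N) Hgl Hbl Hcq).
  assert (HcS : lt c (a (S N))) by (apply HaS; right; exact Hcp).
  destruct (classic (lt c lam)) as [Hlt|Hnlt].
  - apply Hbc. apply HN; auto.
  - destruct (Htri c lam) as [H|[H|H]].
    + contradiction.
    + subst c. apply (Hirr lam). apply (Htr _ _ _ HcS (Hlam (S N))).
    + apply (Hirr c). apply (Htr _ _ _ HcS). apply (Htr _ _ _ (Hlam (S N)) H).
Qed.
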